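(* Let $K$ be a circle of radius $1$ and centre $O$. Let $A,B\in K$ be such that the triangle $OAB$ is positively (counter-clockwise) oriented and $\eta=\angle BOA<1/10$. Let $K_A$ and $K_B$ be the circles obtained by rotating $K$ about the points $A$ and $B$ in the negative direction by the angles $\alpha$ and $\beta$ respectively, where $0<\alpha<3\beta/4$ and $\beta<\eta$. Then one of the intersection points of $K_A$ and $K_B$ lies outside $K$, and its distance from $A$ is less than $50\eta$.
   Context: The positive direction of rotation is counter-clockwise; the negative direction is clockwise. *)

(* Defs.v *)
From Stdlib Require Import Reals.
Open Scope R_scope.

Definition point : Type := (R * R)%type.

Definition pdist (P Q : point) : R :=
  sqrt ((fst P - fst Q)^2 + (snd P - snd Q)^2).

Definition angle (P O Q : point) : R :=
  acos (((fst P - fst O) * (fst Q - fst O) + (snd P - snd O) * (snd Q - snd O))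
        / (pdist P O * pdist Q O)).

Definition ccw (O A B : point) : Prop :=
  (fst A - fst O) * (snd B - snd O) - (snd A - snd O) * (fst B - fst O) > 0.

Definition rotate (C : point) (t : R) (X : point) : point :=
  (fst C + cos t * (fst X - fst C) - sin t * (snd X - snd C),
   snd C + sin t * (fst X - fst C) + cos t * (snd X - snd C)).

Definition on_circle (C : point) (r : R) (X : point) : Prop := pdist X C = r.

Definition rotated_circle (P : point) (t : R) (C : point) (r : R) : point -> Prop :=
  fun X => exists Y : point, on_circle C r Y /\ X = rotate P t Y.

(* Main.v *)
Require Import Defs.
From Stdlib Require Import Reals.
From Stdlib Require Import Lra Psatz.
Open Scope R_scope.

Lemma trigb x : 0 < x <= 1/5 ->
  0 < sin x /\ sin x <= x /\ x - x^3/6 <= sin x /\ 1 - x^2/2 <= cos x /\ cos x <= 1.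
Proof. intros [H1 H2].
pose proof (pre_sin_bound x 0 ltac:(lra) ltac:(lra)) as [Hs _].
pose proof (pre_cos_bound x 0 ltac:(lra) ltac:(lra)) as [Hc _].
unfold sin_approx, cos_approx, sin_term, cos_term in *. simpl in *.
pose proof (sin_lt_x x H1). pose proof (COS_bound x).
assert (x^2 <= 1/25) by nra.
assert (x^3 <= x/25) by nra.
repeat split; nra.
Qed.

Lemma pyth x : sin x ^ 2 + cos x ^ 2 = 1.
Proof. pose proof (sin2_cos2 x). unfold Rsqr in H. lra. Qed.

Lemma rot_circ C1 C2 t X1 X2 :
  (X1 - (C1 - cos t * C1 - sin t * C2))^2 + (X2 - (C2 + sin t * C1 - cos t * C2))^2 = 1 ->
  rotated_circle (C1, C2) (-t) (0,0) 1 (X1, X2).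
Proof.
intros H. pose proof (pyth t) as Hp.
set (c := cos t) in *. set (s := sin t) in *.
exists (rotate (C1,C2) t (X1,X2)). split.
- unfold on_circle, pdist, rotate; cbn [fst snd]. fold c s.
  match goal with |- sqrt ?E = 1 => assert (EE : E = 1); [|rewrite EE; apply sqrt_1] end.
  transitivity ((X1 - (C1 - c*C1 - s*C2))^2 + (X2 - (C2 + s*C1 - c*C2))^2
    + (c^2+s^2-1)*((X1-C1)^2+(X2-C2)^2 - (C1^2+C2^2))).
  + field.
  + rewrite H. replace (c^2+s^2-1) with 0 by lra. field.
- unfold rotate; cbn [fst snd]. rewrite cos_neg, sin_neg. fold c s. f_equal.
  + transitivity (C1 + (c^2+s^2)*(X1-C1)). replace (c^2+s^2) with 1 by lra. field. field.
  + transitivity (C2 + (c^2+s^2)*(X2-C2)). replace (c^2+s^2) with 1 by lra. field. field.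
Qed.

Lemma mul_ge x y x0 y0 : 0 <= x0 <= x -> 0 <= y0 <= y -> x0*y0 <= x*y.
Proof. intros. apply Rmult_le_compat; lra. Qed.

Lemma Lb b e g h : 0<b -> b<e -> e<1/10 -> b/5 <= g <= 2*e -> -3*b*e <= h <= 3*b*e ->
  g^2+h^2 >= b^2/25 /\ g^2+h^2 <= 4 /\ h^2 <= 225*e^2*(g^2+h^2) /\ g^2 <= 4*e^2 /\ -h <= 3*e^2.
Proof. intros. 
assert (G1: (b/5)*(b/5) <= g*g) by (apply Rmult_le_compat; lra).
assert (G2: g*g <= (2*e)*(2*e)) by (apply Rmult_le_compat; lra).
assert (K3: 0 <= (3*b*e - h)*(3*b*e+h)) by (apply Rmult_le_pos; lra).
assert (K4: b*e <= e*e) by (apply Rmult_le_compat_r; lra).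
assert (K5: 0 <= h*h) by nra.
assert (K6: b*b*(e*e) <= e*e*(e*e)) by (apply Rmult_le_compat_r; nra).
assert (K7: e*e <= 1/100) by nra.
repeat split; try nra.
Qed.
Lemma fin u h g qq e : 0 < e -> 0 <= u -> u^2 = 1 - qq - g^2/4 -> 0 <= qq -> qq <= 225*e^2 ->
  g^2 <= 4*e^2 -> -h <= 3*e^2 -> 2 - h - 2*u < (50*e)^2.
Proof. intros. assert (0 <= g^2) by nra. assert (u <= 1) by nra. assert (1 - u <= 1 - u^2) by nra. nra. Qed.

Lemma eq_sq u v w z : u = w -> v = z -> w^2+z^2 = 1 -> u^2+v^2 = 1.
Proof. intros -> ->; auto. Qed.

Lemma canon (a b e : R) : 0 < a -> a < 3*b/4 -> b < e -> e < 1/10 ->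
 exists X : point, rotated_circle (1,0) (-a) (0,0) 1 X /\
   rotated_circle (cos e, sin e) (-b) (0,0) 1 X /\
   pdist X (0,0) > 1 /\ pdist X (1,0) < 50*e.
Proof.
intros Ha Hab Hbe He.
destruct (trigb a ltac:(lra)) as (Sa1 & Sa2 & Sa3 & Ca1 & Ca2).
destruct (trigb b ltac:(lra)) as (Sb1 & Sb2 & Sb3 & Cb1 & Cb2).
destruct (trigb e ltac:(lra)) as (Se1 & Se2 & Se3 & Ce1 & Ce2).
destruct (trigb (e+a) ltac:(lra)) as (St1 & St2 & St3 & Ct1 & Ct2).
pose proof (pyth a) as Hpa.
pose proof (sin_plus e a) as Hst. pose proof (cos_plus e a) as Hct.
assert (Hth : 0 < e + a <= 1/5) by lra.
set (th := e + a) in *.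
set (ca := cos a) in *. set (sa := sin a) in *.
set (cb := cos b) in *. set (sb := sin b) in *.
set (ce := cos e) in *. set (se := sin e) in *.
set (sth := sin th) in *. set (cth := cos th) in *.
set (c1x := 1 - ca). set (c1y := sa).
set (c2x := ce - cb*ce - sb*se). set (c2y := se + sb*ce - cb*se).
set (dx := c2x - c1x). set (dy := c2y - c1y).
set (L2 := dx^2 + dy^2).
set (g := dx*sa + dy*ca). set (h := dx*ca - dy*sa).
assert (Hg : g = (1-cb)*sth + sb*cth - sa).
{ unfold g, dx, dy, c1x, c1y, c2x, c2y. rewrite Hst, Hct. field. }
assert (Hh : h = (1-cb)*cth - sb*sth + 1 - ca).
{ transitivity ((1-cb)*cth - sb*sth - ca + (sa^2+ca^2)).
  unfold h, dx, dy, c1x, c1y, c2x, c2y. rewrite Hst, Hct. field.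
  rewrite Hpa. field. }
assert (HL : L2 = g^2 + h^2).
{ transitivity (L2 * (sa^2+ca^2)). rewrite Hpa; field.
  unfold L2, g, h. field. }
assert (Hb2 : b^2 <= 1/100) by nra.
assert (Hsb : sb >= 99/100*b) by nra.
assert (Hse : se >= 99/100*e) by nra.
assert (Hsa : sa >= 99/100*a) by nra.
assert (Hth2 : th^2 <= 1/25) by (unfold th; nra).
assert (Hcth : cth >= 98/100) by nra.
assert (Hce : ce >= 99/100) by nra.
assert (Hg1 : g >= b/5).
{ rewrite Hg. assert (0 <= (1-cb)*sth) by (apply Rmult_le_pos; lra).
  assert (sb*cth >= 99/100*b*(98/100)) by nra. lra. }
assert (Hg2 : g <= 2*e).
{ rewrite Hg. assert (0 <= (1-cb)*(1-sth)) by (apply Rmult_le_pos; lra).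
  assert (0 <= sb*(1-cth)) by (apply Rmult_le_pos; lra).
  assert (1 - cb <= b^2/2) by lra. nra. }
assert (Hh1 : -3*b*e <= h <= 3*b*e).
{ rewrite Hh.
  assert (0 <= (1-cb)*cth <= b^2/2) by (split; nra).
  assert (0 <= sb*sth <= b*th) by (split; nra).
  assert (b*th <= 2*b*e) by (unfold th; nra).
  assert (a^2 <= b*e) by nra.
  assert (b^2 <= b*e) by nra.
  split; nra. }
set (dot := c1x*c2x + c1y*c2y).
set (cr := c1x*c2y - c1y*c2x).
assert (Hdot : dot > 0).
{ assert (E : dot = (1-ca)*ce*(1-cb) + sa*se*(1-cb) + sb*(sa*ce - (1-ca)*se))
    by (unfold dot, c1x, c1y, c2x, c2y; field).
  rewrite E.
  assert (0 <= (1-ca)*ce*(1-cb)).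
  { apply Rmult_le_pos; [apply Rmult_le_pos|]; lra. }
  assert (0 <= sa*se*(1-cb)).
  { apply Rmult_le_pos; [apply Rmult_le_pos|]; lra. }
  assert (99/100*a*(99/100) <= sa*ce) by (apply mul_ge; lra).
  assert ((1-ca)*se <= a^2/2*e) by (apply mul_ge; lra).
  assert (a*e <= 1/10*(1/10)) by (apply mul_ge; lra).
  assert (a*(a*e) <= a*(1/10*(1/10))) by (apply Rmult_le_compat_l; lra).
  assert (a^2/2*e <= a/200) by ((replace (a^2/2*e) with (a*(a*e)/2) by field); lra).
  assert (0 < sa*ce - (1-ca)*se) by lra.
  assert (0 < sb*(sa*ce - (1-ca)*se)) by (apply Rmult_lt_0_compat; lra).
  lra. }
assert (Hcr : cr >= 0).
{ assert (E : cr = (1-ca)*(se*(1-cb) + sb*ce) + sa*(sb*se - ce*(1-cb)))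
    by (unfold cr, c1x, c1y, c2x, c2y; field).
  rewrite E.
  assert (0 <= (1-ca)*(se*(1-cb) + sb*ce)).
  { apply Rmult_le_pos; [lra|]. assert (0 <= se*(1-cb)) by (apply Rmult_le_pos; lra).
    assert (0 <= sb*ce) by (apply Rmult_le_pos; lra). lra. }
  assert (99/100*b*(99/100*e) <= sb*se) by (apply mul_ge; lra).
  assert (ce*(1-cb) <= 1*(1-cb)) by (apply mul_ge; lra).
  assert (b*e >= b^2) by nra.
  assert (0 <= sb*se - ce*(1-cb)) by nra.
  assert (0 <= sa*(sb*se - ce*(1-cb))) by (apply Rmult_le_pos; lra).
  lra. }
destruct (Lb b e g h ltac:(lra) Hbe He ltac:(lra) Hh1) as (HL1 & HL2 & HL3 & HL4 & HL5).
rewrite <- HL in HL1, HL2, HL3.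
assert (0 < b^2) by (apply pow_lt; lra).
assert (HL0 : L2 > 0) by lra.
assert (Hpos : 0 <= 1/L2 - 1/4).
{ assert (/4 <= /L2) by (apply Rinv_le_contravar; lra). unfold Rdiv. lra. }
set (t := sqrt (1/L2 - 1/4)).
assert (Ht : t*t = 1/L2 - 1/4) by (apply sqrt_sqrt; exact Hpos).
assert (Ht0 : 0 <= t) by apply sqrt_pos.
assert (tL : t*t*L2 = 1 - L2/4) by (rewrite Ht; field; lra).
set (x := (c1x+c2x)/2 + t*dy). set (y := (c1y+c2y)/2 - t*dx).
assert (HX1 : (x - c1x)^2 + (y - c1y)^2 = 1).
{ transitivity (L2/4 + t*t*L2). unfold x, y, L2, dx, dy. field. rewrite tL; field. }
assert (HX2 : (x - c2x)^2 + (y - c2y)^2 = 1).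
{ transitivity (L2/4 + t*t*L2). unfold x, y, L2, dx, dy. field. rewrite tL; field. }
assert (HXO : x^2 + y^2 = 1 + dot + 2*t*cr).
{ transitivity (dot + L2/4 + t*t*L2 + 2*t*cr).
  unfold x, y, L2, dx, dy, dot, cr. field. rewrite tL; field. }
assert (HXA : (x-1)^2 + y^2 = 2 - h - 2*t*g).
{ transitivity ((x - c1x)^2 + (y - c1y)^2 - h - 2*t*g + (sa^2+ca^2)).
  unfold x, y, h, g, dx, dy, c1x, c1y. field. rewrite HX1, Hpa. field. }
set (qq := h^2/L2).
assert (Hq0 : 0 <= qq).
{ unfold qq. apply Rmult_le_pos; [apply pow2_ge_0 | left; apply Rinv_0_lt_compat; lra]. }
assert (Hq : qq <= 225*e^2).
{ unfold qq. apply (Rmult_le_reg_r L2); [lra|].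
  replace (h^2/L2*L2) with (h^2) by (field; lra). lra. }
assert (Htg : (t*g)^2 = 1 - qq - g^2/4).
{ transitivity (t*t*g^2). field. rewrite Ht. unfold qq. rewrite HL. field. lra. }
assert (Htg0 : 0 <= t*g) by (apply Rmult_le_pos; lra).
assert (Hfin : (x-1)^2 + y^2 < (50*e)^2).
{ rewrite HXA. replace (2 - h - 2*t*g) with (2 - h - 2*(t*g)) by field. apply (fin (t*g) h g qq e); lra. }
exists (x, y). split; [|split; [|split]].
- apply rot_circ. eapply eq_sq; [| | exact HX1]; unfold c1x, c1y; fold ca sa; field.
- apply rot_circ. eapply eq_sq; [| | exact HX2]; unfold c2x, c2y; fold cb sb; field.
- unfold pdist; cbn [fst snd]. rewrite <- sqrt_1. apply Rlt_gt, sqrt_lt_1_alt.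
  split; [lra|]. replace ((x-0)^2 + (y-0)^2) with (x^2+y^2) by field.
  rewrite HXO. assert (0 <= t*cr) by (apply Rmult_le_pos; lra). lra.
- unfold pdist; cbn [fst snd]. rewrite <- (sqrt_pow2 (50*e)) by lra. apply sqrt_lt_1_alt.
  split; [apply Rplus_le_le_0_compat; apply pow2_ge_0|]. replace ((y-0)^2) with (y^2) by field. exact Hfin.
Qed.

Definition Tm (o1 o2 p q : R) (z : point) : point :=
  (o1 + p*fst z - q*snd z, o2 + q*fst z + p*snd z).

Lemma T_dist o1 o2 p q z w : p^2+q^2 = 1 -> pdist (Tm o1 o2 p q z) (Tm o1 o2 p q w) = pdist z w.
Proof. intros H. destruct z as [z1 z2], w as [w1 w2]. unfold pdist, Tm; cbn [fst snd]. f_equal.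
transitivity ((p^2+q^2)*((z1-w1)^2+(z2-w2)^2)). field. rewrite H. field. Qed.

Lemma T_rot o1 o2 p q C t X : rotate (Tm o1 o2 p q C) t (Tm o1 o2 p q X) = Tm o1 o2 p q (rotate C t X).
Proof. destruct C, X. unfold rotate, Tm; cbn [fst snd]. f_equal; field. Qed.

Lemma T_rc o1 o2 p q C t Z r X : p^2+q^2 = 1 -> rotated_circle C t Z r X ->
  rotated_circle (Tm o1 o2 p q C) t (Tm o1 o2 p q Z) r (Tm o1 o2 p q X).
Proof. intros H [Y [HY ->]]. exists (Tm o1 o2 p q Y). split.
unfold on_circle in *. rewrite T_dist; auto. rewrite T_rot; auto. Qed.

Lemma sqrt_eq1 x : 0 <= x -> sqrt x = 1 -> x = 1.
Proof. intros H E. rewrite <- (sqrt_sqrt x H), E. field. Qed.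

Theorem lemma3 (O A B : point) (alpha beta : R) :
  on_circle O 1 A -> on_circle O 1 B ->
  ccw O A B ->
  angle B O A < 1/10 ->
  0 < alpha -> alpha < 3 * beta / 4 -> beta < angle B O A ->
  exists X : point,
    rotated_circle A (- alpha) O 1 X /\
    rotated_circle B (- beta) O 1 X /\
    pdist X O > 1 /\
    pdist X A < 50 * angle B O A.
Proof.
intros HA HB Hccw Hang Ha Hab Hbe.
destruct O as [o1 o2], A as [a1 a2], B as [b1 b2].
unfold on_circle, pdist in HA, HB. cbn [fst snd] in HA, HB.
unfold ccw in Hccw. cbn [fst snd] in Hccw.
set (p := a1 - o1) in *. set (q := a2 - o2) in *.
set (r := b1 - o1) in *. set (s := b2 - o2) in *.
assert (Hpq : p^2+q^2 = 1) by (apply sqrt_eq1; [apply Rplus_le_le_0_compat; apply pow2_ge_0 | exact HA]).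
assert (Hrs : r^2+s^2 = 1) by (apply sqrt_eq1; [apply Rplus_le_le_0_compat; apply pow2_ge_0 | exact HB]).
set (dt := r*p + s*q). set (cr := p*s - q*r).
assert (Hdc : dt^2 + cr^2 = 1).
{ transitivity ((p^2+q^2)*(r^2+s^2)). unfold dt, cr. field. rewrite Hpq, Hrs. field. }
assert (Hdt : -1 <= dt <= 1).
{ assert (0 <= cr^2) by apply pow2_ge_0. split; nra. }
assert (Heta : angle (b1,b2) (o1,o2) (a1,a2) = acos dt).
{ unfold angle. f_equal. unfold pdist. cbn [fst snd]. fold p q r s. rewrite HA, HB. unfold dt. field. }
rewrite Heta in *.
set (eta := acos dt) in *.
assert (Hce : cos eta = dt) by (apply cos_acos; exact Hdt).
assert (Hse : sin eta = cr).
{ unfold eta. rewrite sin_acos by exact Hdt.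
  replace (1 - dt²) with (cr^2) by (unfold Rsqr; lra). apply sqrt_pow2. unfold cr; lra. }
destruct (canon alpha beta eta Ha Hab Hbe Hang) as (X0 & H1 & H2 & H3 & H4).
assert (E0 : (o1,o2) = Tm o1 o2 p q (0,0)) by (unfold Tm; cbn [fst snd]; f_equal; field).
assert (EA : (a1,a2) = Tm o1 o2 p q (1,0)) by (unfold Tm, p, q; cbn [fst snd]; f_equal; field).
assert (EB : (b1,b2) = Tm o1 o2 p q (cos eta, sin eta)).
{ unfold Tm; cbn [fst snd]. rewrite Hce, Hse. f_equal.
  - transitivity (o1 + r*(p^2+q^2)). rewrite Hpq. unfold r. field. unfold dt, cr. field.
  - transitivity (o2 + s*(p^2+q^2)). rewrite Hpq. unfold s. field. unfold dt, cr. field. }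
exists (Tm o1 o2 p q X0).
rewrite E0, EA, EB.
split; [|split; [|split]].
- apply T_rc; auto.
- apply T_rc; auto.
- rewrite T_dist; auto.
- rewrite T_dist; auto.
Qed.
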